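(* Let $n>k>0$ be integers and let $A$ be a $k$-splitting of $Q_2^n$. Then for every fixed direction, the number of $(n-k)$-faces in $A$ having this direction is even.
   Context: $Q_2^n=\{0,1\}^n$. For $0\le m\le n$, an $m$-face of $Q_2^n$ is given by a tuple $a=(a_1,\dots,a_n)\in\{0,1,*\}^n$ with exactly $m$ entries equal to $*$; it denotes the set $\{x\in Q_2^n : x_i=a_i \text{ whenever } a_i\in\{0,1\}\}$. The direction of a face is the set of positions of its asterisks. A $k$-splitting of $Q_2^n$ is a collection of exactly $2^k$ $(n-k)$-faces whose union is $Q_2^n$ (equivalently, a partition of $Q_2^n$ into $(n-k)$-faces). *)

(* Defs.v *)
From mathcomp Require Import all_boot.
Set Implicit Arguments. Unset Strict Implicit. Unset Printing Implicit Defensive.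

Definition vertex (n : nat) := {ffun 'I_n -> bool}.

(* A face a in {0,1,*}^n: None encodes '*', Some b encodes the bit b. *)
Definition face (n : nat) := {ffun 'I_n -> option bool}.

Definition direction n (a : face n) : {set 'I_n} := [set i | a i == None].

Definition is_mface n (m : nat) (a : face n) : bool := #|direction a| == m.

Definition in_face n (x : vertex n) (a : face n) : bool :=
  [forall i, if a i is Some b then x i == b else true].

Definition k_splitting n (k : nat) (A : {set face n}) : Prop :=
  [/\ #|A| = 2 ^ k,
      forall a, a \in A -> is_mface (n - k) a
    & forall x : vertex n, exists2 a, a \in A & in_face x a].

(* Main.v *)
Require Import Defs.
From mathcomp Require Import all_boot.
From mathcomp Require Import zify.
Set Implicit Arguments. Unset Strict Implicit. Unset Printing Implicit Defensive.

Lemma foldr_prod (T : finType) (f : T -> nat) :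
  foldr muln 1 [seq f x | x : T] = \prod_x f x.
Proof. rewrite /image_mem foldr_map; transitivity (\prod_(x in T) f x); last by apply: eq_bigl. by rewrite -big_enum unlock. Qed.

Lemma card_face n (a : face n) : #|[set x : vertex n | in_face x a]| = 2 ^ #|direction a|.
Proof.
pose F := fun i : 'I_n => if a i is Some b then pred1 b else predT.
have -> : #|[set x : vertex n | in_face x a]| = #|family F|.
  apply: eq_card => x; rewrite inE; apply/forallP/familyP => H i; move: (H i);
  by rewrite /F; case: (a i).
rewrite card_family foldr_prod (bigID (fun i => a i == None)) /=.
rewrite (eq_bigr (fun _ => 2)); last first.
  by move=> i /eqP Hi; rewrite /F Hi; apply: card_bool.
rewrite [X in _ * X]big1 ?muln1; last first.
  by move=> i; rewrite /F; case: (a i) => // b _; apply: card1.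
rewrite -(prod_nat_const (mem (direction a))); apply: eq_bigl => i; by rewrite inE.
Qed.

Lemma card_sum (T : finType) (P : pred T) : #|[set x | P x]| = \sum_x (P x : nat).
Proof. by rewrite -sum1_card big_mkcond; apply: eq_bigr => x _; rewrite inE; case: (P x). Qed.

Lemma card_sum_in (T : finType) (A : {set T}) (P : pred T) :
  #|[set x in A | P x]| = \sum_(x in A) (P x : nat).
Proof. by rewrite card_sum [RHS]big_mkcond; apply: eq_bigr => x _; case: (x \in A). Qed.

Section Flip.
Variable n : nat.

Definition flip (j : 'I_n) (x : vertex n) : vertex n :=
  [ffun i => if i == j then ~~ x i else x i].

Lemma flipK j : involutive (flip j).
Proof. by move=> x; apply/ffunP=> i; rewrite !ffunE; case: eqP => // _; rewrite negbK. Qed.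

Lemma flip_inj j : injective (flip j). Proof. exact: inv_inj (flipK j). Qed.

Definition par (S : {set 'I_n}) (x : vertex n) : bool := \big[addb/false]_(i in S) x i.

Lemma par_flip (S : {set 'I_n}) j x : j \in S -> par S (flip j x) = ~~ par S x.
Proof.
move=> jS; rewrite /par (bigD1 j jS) [in RHS](bigD1 j jS) /= ffunE eqxx addNb.
congr (~~ (_ (+) _)); apply: eq_bigr => i /andP[_ ne].
by rewrite ffunE (negbTE ne).
Qed.

Lemma flip_card (Q : pred (vertex n)) (S : {set 'I_n}) j : j \in S ->
  (forall x, Q (flip j x) = Q x) ->
  #|[set x | par S x && Q x]| = #|[set x | ~~ par S x && Q x]|.
Proof.
move=> jS HQ; rewrite -[RHS](card_preimset _ (@flip_inj j)).
by apply: eq_card => x; rewrite !inE HQ par_flip // negbK.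
Qed.

Lemma in_face_flip (a : face n) j x : a j = None -> in_face (flip j x) a = in_face x a.
Proof.
move=> aj; apply: eq_forallb => i; rewrite ffunE.
by case: eqP => [->|//]; rewrite aj.
Qed.

End Flip.

Theorem proposition5 (n k : nat) (A : {set face n}) :
  0 < k -> k < n -> k_splitting k A ->
  forall D : {set 'I_n}, ~~ odd #|[set a in A | direction a == D]|.
Proof.
move=> k0 kn [cardA mA cover] D.
have [HD|HD] := eqVneq #|D| (n - k); last first.
  suff -> : [set a in A | direction a == D] = set0 by rewrite cards0.
  apply/setP => a; rewrite !inE; apply/negP => /andP[aA /eqP dD].
  by move: (mA a aA); rewrite /is_mface dD (negbTE HD).
set S := ~: D.
have [j jS] : exists j, j \in S.
  apply/set0Pn; rewrite -card_gt0; have := cardsC D; rewrite card_ord HD /S; lia.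
have cgt0 : forall x, 0 < #|[set a in A | in_face x a]|.
  move=> x; have [a aA xa] := cover x; apply/card_gt0P; exists a; by rewrite inE aA.
have csum : \sum_(x : vertex n) #|[set a in A | in_face x a]| = \sum_(x : vertex n) 1.
  rewrite sum1_card card_ffun card_bool card_ord.
  under eq_bigr do rewrite card_sum_in.
  rewrite exchange_big /=.
  under eq_bigr => a aA do rewrite -card_sum card_face (eqP (mA a aA)).
  by rewrite sum_nat_const cardA -expnD subnKC // ltnW.
have c1 : forall x, #|[set a in A | in_face x a]| = 1.
  move=> x0; apply/eqP; rewrite eqn_leq cgt0 andbT.
  move: csum; rewrite (bigD1 x0) // [in RHS](bigD1 x0) //=.
  have : \sum_(x | x != x0) 1 <= \sum_(x | x != x0) #|[set a in A | in_face x a]|.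
    by apply: leq_sum => x _; apply: cgt0.
  move=> H E; have := leq_add (leqnn #|[set a in A | in_face x0 a]|) H; by rewrite E leq_add2r.
have part : forall R : pred (vertex n),
    #|[set x | R x]| = \sum_(a in A) #|[set x | R x && in_face x a]|.
  move=> R; rewrite card_sum.
  under eq_bigr => x _ do rewrite -[(R x : nat)]muln1 -(c1 x) card_sum_in big_distrr.
  rewrite exchange_big /=; apply: eq_bigr => a _; rewrite card_sum.
  by apply: eq_bigr => x _; rewrite mulnb.
have E1 : #|[set x | par S x]| = #|[set x | ~~ par S x]|.
  transitivity #|[set x | par S x && predT x]|; first by apply: eq_card => x; rewrite !inE andbT.
  rewrite (@flip_card _ predT S j jS) //; by apply: eq_card => x; rewrite !inE andbT.
move: E1; rewrite part [X in _ = X -> _]part => E1.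
rewrite (bigID (fun a => direction a == D)) [in RHS](bigID (fun a => direction a == D)) /= in E1.
have nonD : \sum_(a in A | direction a != D) #|[set x | par S x && in_face x a]|
          = \sum_(a in A | direction a != D) #|[set x | ~~ par S x && in_face x a]|.
  apply: eq_bigr => a /andP[aA dA].
  have : ~~ (direction a \subset D).
    apply: contra dA => sub; by rewrite eqEcard sub /= HD (eqP (mA a aA)).
  case/subsetPn => i ia iD.
  apply: (@flip_card _ _ S i) => [|x]; first by rewrite /S inE.
  apply: in_face_flip; by move: ia; rewrite inE => /eqP.
move: E1; rewrite nonD addnC [in RHS]addnC => /addnI E1.
pose x0 (a : face n) : vertex n := [ffun i => odflt false (a i)].
have key : forall a x, direction a = D -> in_face x a -> par S x = par S (x0 a).
  move=> a x dA /forallP xa; apply: eq_bigr => i iS.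
  have := xa i; rewrite ffunE.
  case e: (a i) => [b|] /=; first by move/eqP.
  by move: iS; rewrite /S inE -dA inE e eqxx.
have Dval : forall a (c : bool), direction a = D ->
    (forall x, in_face x a -> par S x = par S (x0 a)) ->
    #|[set x | (if c then par S x else ~~ par S x) && in_face x a]|
    = (if c then par S (x0 a) else ~~ par S (x0 a)) * 2 ^ (n - k).
  move=> a c dA Hk.
  transitivity #|[set x | (if c then par S (x0 a) else ~~ par S (x0 a)) && in_face x a]|.
    apply: eq_card => x; rewrite !inE; case h: (in_face x a); last by rewrite !andbF.
    by rewrite (Hk x h).
  case: (if c then _ else _); last first.
    by rewrite -[RHS](cards0 (vertex n)); apply: eq_card => x; rewrite !inE.
  rewrite mul1n -HD -dA -card_face; by apply: eq_card => x; rewrite !inE.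
have E2 : \sum_(a in A | direction a == D) (par S (x0 a) : nat) * 2 ^ (n - k)
        = \sum_(a in A | direction a == D) (~~ par S (x0 a) : nat) * 2 ^ (n - k).
  transitivity (\sum_(a in A | direction a == D) #|[set x | par S x && in_face x a]|).
    apply: eq_bigr => a /andP[_ /eqP dA]; symmetry; exact: (Dval a true dA (fun x => key a x dA)).
  rewrite E1; apply: eq_bigr => a /andP[_ /eqP dA].
  exact: (Dval a false dA (fun x => key a x dA)).
rewrite -!big_distrl /= in E2; move/eqP: E2; rewrite eqn_pmul2r ?expn_gt0 // => /eqP E2.
have -> : #|[set a in A | direction a == D]| =
   \sum_(a in A | direction a == D) ((par S (x0 a) : nat) + (~~ par S (x0 a) : nat)).
  rewrite -sum1_card; apply: eq_big => [a|a _]; first by rewrite !inE.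
  by case: (par S (x0 a)).
by rewrite big_split /= -E2 addnn odd_double.
Qed.
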